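(* For the hypergeometric weights described in the context, for all $n$: $H_n=\dfrac{\tau_{n+1}}{\tau_n}$ and $p^1_n=-\vartheta\log\tau_n$.
   Context: Weights on $\mathbb N_0$: $w^{(a)}(k)=\frac{(b^{(a)}_1)_k\cdots(b^{(a)}_{M^{(a)}})_k}{(c_1)_k\cdots(c_N)_k}\frac{(\eta^{(a)})^k}{k!}$, $a\in\{1,2\}$, with convergent series. Moment matrix $\mathscr M$ (indices from 0): $\mathscr M_{n,2m}=\sum_k k^{n+m}w^{(1)}(k)$, $\mathscr M_{n,2m+1}=\sum_k k^{n+m}w^{(2)}(k)$. $\tau_n$ is the $n$-th leading principal minor ($\tau_0=1$), assumed nonzero for all $n$, so $\mathscr M=S^{-1}H\tilde S^{-\top}$ with $S,\tilde S$ lower unitriangular and $H=\operatorname{diag}(H_0,H_1,\dots)$. $B_n(x)=x^n+p^1_nx^{n-1}+\cdots$ is the $n$-th entry of $SX(x)$, $X(x)=(1,x,x^2,\dots)^\top$ (the monic type II multiple orthogonal polynomial on the step line). $\vartheta=\eta^{(1)}\partial/\partial\eta^{(1)}+\eta^{(2)}\partial/\partial\eta^{(2)}$. *)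

(* Defs.v *)
From Stdlib Require Import Reals List.
From Coquelicot Require Import Coquelicot.
From mathcomp Require Import all_boot all_algebra.
From mathcomp Require Import Rstruct.

Set Implicit Arguments.
Unset Strict Implicit.
Unset Printing Implicit Defensive.

Local Open Scope R_scope.

Fixpoint poch (x : R) (k : nat) : R :=
  match k with
  | O => 1
  | S k' => poch x k' * (x + INR k')
  end.

Definition prodR (l : list R) : R := fold_right Rmult 1 l.

Definition hweight (bs cs : list R) (eta : R) (k : nat) : R :=
  prodR (map (fun b => poch b k) bs) / prodR (map (fun c => poch c k) cs)
  * eta ^ k / INR (Factorial.fact k).

Definition moment (bs1 bs2 cs : list R) (eta1 eta2 : R) (n j : nat) : R :=
  if Nat.even j
  then Series (fun k => INR k ^ (n + Nat.div2 j) * hweight bs1 cs eta1 k)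
  else Series (fun k => INR k ^ (n + Nat.div2 j) * hweight bs2 cs eta2 k).

Definition tau (bs1 bs2 cs : list R) (eta1 eta2 : R) (n : nat) : R :=
  (\det (\matrix_(i < n, j < n) moment bs1 bs2 cs eta1 eta2 i j))%R.

Definition lower_unitri (S : nat -> nat -> R) : Prop :=
  (forall i, S i i = 1) /\ (forall i j, (i < j)%nat -> S i j = 0).

(* Gauss-Borel factorization  M = S^{-1} H St^{-T}, written equivalently
   (S, St lower unitriangular, all sums finite) as  S M St^T = diag(H). *)
Definition gauss_borel (Mo : nat -> nat -> R) (S St : nat -> nat -> R)
  (H : nat -> R) : Prop :=
  lower_unitri S /\ lower_unitri St /\
  forall i j,
    sum_f_R0 (fun k => sum_f_R0 (fun l => S i k * Mo k l * St j l) j) i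
    = if Nat.eqb i j then H i else 0.

(* B_n(x) = n-th entry of S X(x) = sum_{j<=n} S_{n,j} x^j. *)
Definition Bpoly (S : nat -> nat -> R) (n : nat) (x : R) : R :=
  sum_f_R0 (fun j => S n j * x ^ j) n.

(* p^1_n = coefficient of x^(n-1) in B_n (taken to be 0 for n = 0). *)
Definition p1 (Sm : nat -> nat -> R) (n : nat) : R :=
  match n with O => 0 | S n' => Sm n n' end.

(* Main.v *)
Require Import Defs.
From Stdlib Require Import Reals List.
From Coquelicot Require Import Coquelicot.
From Stdlib Require Import Lra Lia Psatz Classical.

Local Open Scope R_scope.

Definition coef (bs cs : list R) (k : nat) : R :=
  prodR (seq.map (fun b => poch b k) bs) / prodR (seq.map (fun c => poch c k) cs)
  / INR (Factorial.fact k).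

Lemma hweight_coef bs cs x k : hweight bs cs x k = coef bs cs k * x ^ k.
Proof. unfold hweight, coef, Rdiv. ring. Qed.

Lemma prodR_cons a l : prodR (a :: l) = a * prodR l.
Proof. reflexivity. Qed.

Definition prodlin (l : list R) (k : nat) := prodR (seq.map (fun b => b + INR k) l).

Lemma prod_poch_S l k : prodR (seq.map (fun b => poch b (S k)) l)
  = prodR (seq.map (fun b => poch b k) l) * prodlin l k.
Proof. induction l as [|a l IH]; unfold prodlin in *; cbn [seq.map]; rewrite ?prodR_cons; [simpl; ring|]. rewrite IH. simpl. ring. Qed.

Definition goodc (cs : list R) := forall c, In c cs -> forall m : nat, c <> - INR m.

Lemma poch_neq0 c k : (forall m : nat, c <> - INR m) -> poch c k <> 0.
Proof.
  intros H; induction k; simpl; [lra|].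
  apply Rmult_integral_contrapositive_currified; auto.
  intro h; apply (H k); lra.
Qed.

Lemma prod_poch_neq0 cs k : goodc cs -> prodR (seq.map (fun c => poch c k) cs) <> 0.
Proof.
  induction cs as [|a cs IH]; intros H; simpl; [lra|].
  apply Rmult_integral_contrapositive_currified.
  - apply poch_neq0; intros m; apply H; left; auto.
  - apply IH; intros c hc; apply H; right; auto.
Qed.

Lemma prodlin_neq0 cs k : goodc cs -> prodlin cs k <> 0.
Proof.
  unfold prodlin; induction cs as [|a cs IH]; intros H; simpl; [lra|].
  apply Rmult_integral_contrapositive_currified.
  - intro h; apply (H a (or_introl eq_refl) k); lra.
  - apply IH; intros c hc; apply H; right; auto.
Qed.

Definition rat bs cs k := prodlin bs k / prodlin cs k / INR (S k).

Lemma coef_S bs cs k : goodc cs -> coef bs cs (S k) = coef bs cs k * rat bs cs k.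
Proof.
  intros H. unfold coef, rat. rewrite !prod_poch_S, fact_simpl, mult_INR.
  field. repeat split; first [apply not_0_INR; lia | apply INR_fact_neq_0
    | apply prodlin_neq0; auto | apply prod_poch_neq0; auto].
Qed.

Lemma coef_ev_zero bs cs k0 : goodc cs -> coef bs cs k0 = 0 ->
  forall k, (k0 <= k)%nat -> coef bs cs k = 0.
Proof.
  intros Hc H0 k Hle; induction Hle as [|k Hk IH]; auto.
  rewrite coef_S, IH; auto; ring.
Qed.

Lemma radius_from_bound a x :
  (exists r, Rabs x < r /\ exists M, forall n, Rabs (a n * r ^ n) <= M) ->
  Rbar_lt (Rabs x) (CV_radius a).
Proof.
  intros [r [Hr [M HM]]].
  destruct (CV_radius_bounded a) as [Hub _].
  assert (H := Hub r (ex_intro _ M HM)).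
  destruct (CV_radius a) as [l| |]; simpl in *; auto; lra.
Qed.

Lemma sum_ge_term f n m : (forall k, 0 <= f k) -> (n <= m)%nat -> f n <= sum_f_R0 f m.
Proof.
  intros Hf Hle; induction Hle as [|m Hm IH].
  - destruct n; simpl; [lra|]. assert (0 <= sum_f_R0 f n) by (apply cond_pos_sum; auto). lra.
  - simpl. specialize (Hf (S m)). lra.
Qed.

Lemma radius_term bs cs k0 x : goodc cs -> coef bs cs k0 = 0 ->
  Rbar_lt (Rabs x) (CV_radius (coef bs cs)).
Proof.
  intros Hc H0. apply radius_from_bound. exists (Rabs x + 1); split; [lra|].
  exists (sum_f_R0 (fun n => Rabs (coef bs cs n * (Rabs x + 1) ^ n)) k0).
  intros n. destruct (Compare_dec.le_lt_dec n k0) as [h|h].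
  - apply sum_ge_term with (f := fun n => Rabs (coef bs cs n * (Rabs x + 1) ^ n)); auto.
    intros; apply Rabs_pos.
  - rewrite (coef_ev_zero bs cs k0 Hc H0 n); [|lia].
    rewrite Rmult_0_l, Rabs_R0. apply cond_pos_sum. intros; apply Rabs_pos.
Qed.

Lemma not_lim0 u K : u K <> 0 ->
  (forall n, (K <= n)%nat -> Rabs (u n) <= Rabs (u (S n))) -> ~ is_lim_seq u 0.
Proof.
  intros h0 hinc hl.
  assert (hge : forall n, (K <= n)%nat -> Rabs (u K) <= Rabs (u n)).
  { induction 1 as [|m Hm IH]; [lra|]. eapply Rle_trans; [apply IH|]. apply hinc; auto. }
  apply is_lim_seq_spec in hl. simpl in hl.
  destruct (hl (mkposreal (Rabs (u K)) (Rabs_pos_lt _ h0))) as [N HN].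
  specialize (HN (max N K) (Nat.le_max_l _ _)).
  specialize (hge (max N K) (Nat.le_max_r _ _)). simpl in HN.
  rewrite Rminus_0_r in HN. lra.
Qed.

Lemma Rabs_prodR l : Rabs (prodR l) = prodR (seq.map Rabs l).
Proof. induction l; simpl; [apply Rabs_R1|]. rewrite Rabs_mult, IHl; auto. Qed.

Definition gg (l : list R) (n : nat) := prodR (seq.map (fun b => Rabs (1 + b / INR n)) l).

Lemma prodlin_abs_eq l n : INR n <> 0 -> Rabs (prodlin l n) = INR n ^ length l * gg l n.
Proof.
  intros Hn; unfold prodlin, gg; induction l as [|a l IH]; simpl.
  - rewrite Rabs_R1; ring.
  - rewrite Rabs_mult, IH.
    replace (a + INR n) with (INR n * (1 + a / INR n)) by (field; auto).
    rewrite Rabs_mult, (Rabs_pos_eq (INR n)) by apply pos_INR. ring.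
Qed.

Lemma inv_n_lim : is_lim_seq (fun n => / INR n) 0.
Proof.
  assert (H := is_lim_seq_inv _ _ is_lim_seq_INR).
  simpl in H. apply H. discriminate.
Qed.

Lemma gg_lim l : is_lim_seq (fun n => gg l n) 1.
Proof.
  unfold gg; induction l as [|a l IH]; cbn [seq.map].
  - apply is_lim_seq_const.
  - assert (H1 : is_lim_seq (fun n => Rabs (1 + a / INR n)) 1).
    { assert (H2 := is_lim_seq_abs (fun n => 1 + a / INR n) (1 + a * 0)).
      simpl in H2. rewrite Rmult_0_r, Rplus_0_r, Rabs_R1 in H2. apply H2.
      replace (Finite 1) with (Finite (1 + a * 0)) by (f_equal; ring).
      apply is_lim_seq_plus'; [apply is_lim_seq_const|].
      apply (is_lim_seq_scal_l _ a 0 inv_n_lim). }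
    replace (Finite 1) with (Finite (1 * 1)) by (f_equal; ring).
    exact (is_lim_seq_mult' _ _ 1 1 H1 IH).
Qed.

Lemma gg_neq0 cs n : goodc cs -> INR n <> 0 -> gg cs n <> 0.
Proof.
  intros Hc Hn h. assert (H := prodlin_abs_eq cs n Hn). rewrite h, Rmult_0_r in H.
  apply (prodlin_neq0 cs n Hc). apply Rabs_eq_0; auto.
Qed.

Definition hh (M N n : nat) := INR n ^ M / (INR n ^ N * INR (S n)).

Lemma rat_abs_eq bs cs n : goodc cs -> (1 <= n)%nat ->
  Rabs (rat bs cs n) = hh (length bs) (length cs) n * (gg bs n / gg cs n).
Proof.
  intros Hc Hn. assert (Hn0 : INR n <> 0) by (apply not_0_INR; lia).
  assert (HS : INR (S n) <> 0) by (apply not_0_INR; lia).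
  unfold rat, hh. rewrite Rabs_div, Rabs_div, !prodlin_abs_eq, (Rabs_pos_eq (INR (S n)))
    by first [apply pos_INR | assumption | apply prodlin_neq0; assumption].
  assert (gg cs n <> 0) by (apply gg_neq0; auto).
  assert (INR n ^ length cs <> 0) by (apply pow_nonzero; auto).
  field. repeat split; assumption.
Qed.

Lemma invS_lim : is_lim_seq (fun n => / INR (S n)) 0.
Proof. apply (is_lim_seq_incr_1 (fun n => / INR n)). apply inv_n_lim. Qed.

Lemma hh_lim_a M N : (M <= N)%nat -> is_lim_seq (hh M N) 0.
Proof.
  intros HMN. apply is_lim_seq_le_le_loc with (u := fun _ => 0) (w := fun n => / INR (S n));
    [|apply is_lim_seq_const|apply invS_lim].
  exists 1%nat; intros n Hn. unfold hh.
  assert (H1 : 1 <= INR n) by (apply (le_INR 1); auto).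
  assert (HS : 0 < INR (S n)) by (apply lt_0_INR; lia).
  assert (HpN : 0 < INR n ^ N) by (apply pow_lt; lra).
  assert (HpM : 0 < INR n ^ M) by (apply pow_lt; lra).
  split.
  - unfold Rdiv; apply Rmult_le_pos; [lra|]. left; apply Rinv_0_lt_compat, Rmult_lt_0_compat; auto.
  - replace (/ INR (S n)) with (INR n ^ N / (INR n ^ N * INR (S n))) by (field; lra).
    unfold Rdiv; apply Rmult_le_compat_r.
    + left; apply Rinv_0_lt_compat, Rmult_lt_0_compat; auto.
    + apply Rle_pow; auto.
Qed.

Lemma hh_lim_b N : is_lim_seq (hh (S N) N) 1.
Proof.
  apply is_lim_seq_ext_loc with (u := fun n => 1 - / INR (S n)).
  - exists 1%nat; intros n Hn. unfold hh.
    assert (H1 : 1 <= INR n) by (apply (le_INR 1); auto).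
    rewrite S_INR. simpl. field. split; [lra|]. apply pow_nonzero; lra.
  - replace (Finite 1) with (Finite (1 - 0)) by (f_equal; ring).
    apply is_lim_seq_minus'; [apply is_lim_seq_const|apply invS_lim].
Qed.

Lemma hh_lim_c M N : (S (S N) <= M)%nat -> is_lim_seq (hh M N) p_infty.
Proof.
  intros HMN. apply is_lim_seq_le_p_loc with (u := fun n => INR (pred n)).
  - exists 1%nat; intros n Hn. destruct n as [|m]; [lia|]. simpl pred. unfold hh.
    assert (H1 : 1 <= INR (S m)) by (apply (le_INR 1); lia).
    assert (HS : 0 < INR (S (S m))) by (apply lt_0_INR; lia).
    assert (HpN : 0 < INR (S m) ^ N) by (apply pow_lt; lra).
    assert (Hle : INR (S m) ^ (S (S N)) <= INR (S m) ^ M) by (apply Rle_pow; auto).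
    apply Rle_trans with (INR (S m) ^ (S (S N)) / (INR (S m) ^ N * INR (S (S m)))).
    + replace (INR (S m) ^ (S (S N)) / (INR (S m) ^ N * INR (S (S m))))
        with (INR (S m) * INR (S m) / INR (S (S m))) by (cbn [pow]; field; repeat split; lra).
      rewrite (S_INR (S m)) in *. rewrite S_INR in *.
      apply Rmult_le_reg_r with (INR m + 1 + 1); [lra|].
      unfold Rdiv. rewrite Rmult_assoc, Rinv_l by lra. assert (0 <= INR m) by apply pos_INR. nra.
    + unfold Rdiv; apply Rmult_le_compat_r; auto.
      left; apply Rinv_0_lt_compat, Rmult_lt_0_compat; auto.
  - apply (is_lim_seq_incr_1 (fun n => INR (pred n))). apply is_lim_seq_INR.
Qed.

Lemma ggr_lim bs cs : goodc cs -> is_lim_seq (fun n => gg bs n / gg cs n) 1.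
Proof.
  intros Hc. replace (Finite 1) with (Finite (1 / 1)) by (f_equal; field).
  apply is_lim_seq_div'; [apply gg_lim|apply gg_lim|lra].
Qed.

Lemma rat_lim bs cs l : goodc cs -> is_lim_seq (hh (length bs) (length cs)) l ->
  (l = p_infty \/ exists r, l = Finite r) ->
  is_lim_seq (fun n => Rabs (rat bs cs n)) l.
Proof.
  intros Hc Hl Hcase.
  apply is_lim_seq_ext_loc with (u := fun n => hh (length bs) (length cs) n * (gg bs n / gg cs n)).
  { exists 1%nat; intros n Hn. rewrite rat_abs_eq; auto. }
  destruct Hcase as [-> | [r ->]].
  - eapply is_lim_seq_mult; [apply Hl|apply ggr_lim; auto|].
    apply is_Rbar_mult_p_infty_pos. simpl; lra.
  - replace (Finite r) with (Finite (r * 1)) by (f_equal; ring).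
    apply is_lim_seq_mult'; auto. apply ggr_lim; auto.
Qed.

Lemma exists_bound (l : list R) : exists A : nat, forall x, In x l -> Rabs x <= INR A.
Proof.
  induction l as [|a l [A HA]].
  - exists 0%nat; intros x [].
  - destruct (INR_archimed 1 (Rabs a)) as [n Hn]; [lra|].
    exists (max A n); intros x [<-|hx].
    + apply Rle_trans with (INR n); [lra|]. apply le_INR; lia.
    + apply Rle_trans with (INR A); auto. apply le_INR; lia.
Qed.

Lemma prod_lower bs (A n : nat) : (forall b, In b bs -> Rabs b <= INR A) ->
  INR A <= INR n -> (INR n - INR A) ^ length bs <= Rabs (prodlin bs n).
Proof.
  unfold prodlin; induction bs as [|b bs IH]; intros HA Hn; cbn [seq.map length].
  - simpl. rewrite Rabs_R1; lra.
  - rewrite prodR_cons, Rabs_mult. simpl pow.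
    apply Rmult_le_compat.
    + lra.
    + apply pow_le; lra.
    + assert (h := HA b (or_introl eq_refl)).
      assert (h2 := Rle_abs (-b)). rewrite Rabs_Ropp in h2.
      assert (h3 := Rle_abs (b + INR n)). lra.
    + apply IH; auto. intros; apply HA; right; auto.
Qed.

Lemma prod_upper cs (A n : nat) : (forall c, In c cs -> Rabs c <= INR A) ->
  Rabs (prodlin cs n) <= (INR n + INR A) ^ length cs.
Proof.
  unfold prodlin; induction cs as [|c cs IH]; intros HA; cbn [seq.map length].
  - simpl. rewrite Rabs_R1; lra.
  - rewrite prodR_cons, Rabs_mult. simpl pow.
    apply Rmult_le_compat; try apply Rabs_pos.
    + assert (h := HA c (or_introl eq_refl)).
      assert (h2 := Rabs_triang c (INR n)). rewrite (Rabs_pos_eq (INR n)) in h2 by apply pos_INR.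
      lra.
    + apply IH; auto. intros; apply HA; right; auto.
Qed.

Lemma bernoulli_aux (x : R) (c : nat) : 0 <= x -> x ^ c * (x + INR c) <= (x + 1) ^ c * x.
Proof.
  intros Hx; induction c as [|c IH].
  - simpl; lra.
  - rewrite S_INR. simpl pow.
    assert (hp : 0 <= x ^ c) by (apply pow_le; auto).
    assert (hc : 0 <= INR c) by apply pos_INR.
    assert (h1 : (x + 1) * (x ^ c * (x + INR c)) <= (x + 1) * ((x + 1) ^ c * x))
      by (apply Rmult_le_compat_l; lra).
    nra.
Qed.

Lemma key_ineq (n A : R) (c : nat) : 0 <= A -> INR c = 4 * A -> 2 * A <= n -> 0 < n ->
  n ^ c * (n + A) <= (n + 1) ^ c * (n - A).
Proof.
  intros HA Hc Hn Hn0.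
  assert (hB := bernoulli_aux n c (Rlt_le _ _ Hn0)).
  assert (hp : 0 <= n ^ c) by (apply pow_le; lra).
  apply Rmult_le_reg_l with n; [lra|].
  assert (h1 : n ^ c * (n + INR c) * (n - A) <= (n + 1) ^ c * n * (n - A))
    by (apply Rmult_le_compat_r; lra).
  rewrite Hc in h1.
  assert (h2 : n * (n + A) <= (n + 4 * A) * (n - A)) by nra.
  assert (h3 : n ^ c * (n * (n + A)) <= n ^ c * ((n + 4 * A) * (n - A)))
    by (apply Rmult_le_compat_l; auto).
  nra.
Qed.

Lemma raabe bs cs eta : goodc cs -> length bs = S (length cs) -> Rabs eta = 1 ->
  (forall k, coef bs cs k <> 0) ->
  (forall p : nat, ex_series (fun k => INR k ^ p * hweight bs cs eta k)) -> False.
Proof.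
  intros Hc Hlen Heta Hnz Hconv.
  destruct (exists_bound (bs ++ cs)) as [A0 HA0].
  set (A := S A0).
  assert (HA : forall x, In x (bs ++ cs) -> Rabs x <= INR A).
  { intros x hx. apply Rle_trans with (INR A0); auto. apply le_INR; unfold A; lia. }
  assert (HAb : forall b, In b bs -> Rabs b <= INR A) by (intros; apply HA, in_or_app; auto).
  assert (HAc : forall c, In c cs -> Rabs c <= INR A) by (intros; apply HA, in_or_app; auto).
  set (c := (4 * A)%nat). set (N := length cs). set (q := (c * S N)%nat).
  assert (Hq := ex_series_lim_0 _ (Hconv q)).
  apply (not_lim0 _ (S (2 * A)) ) in Hq; auto.
  - rewrite hweight_coef. apply Rmult_integral_contrapositive_currified;
      [apply pow_nonzero, not_0_INR; lia|].
    apply Rmult_integral_contrapositive_currified; auto.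
    apply pow_nonzero. intro h; rewrite h, Rabs_R0 in Heta; lra.
  - intros n Hn. rewrite !hweight_coef, coef_S by auto.
    assert (HAn : 2 * INR A <= INR n).
    { replace (2 * INR A) with (INR (2 * A)) by (rewrite mult_INR; simpl; ring).
      apply le_INR; lia. }
    assert (HA1 : 1 <= INR A) by (apply (le_INR 1); unfold A; lia).
    assert (Hn0 : 0 < INR n) by lra.
    rewrite !Rabs_mult, <- !RPow_abs, Heta, !pow1, !Rmult_1_r.
    rewrite !(Rabs_pos_eq (INR _)) by apply pos_INR.
    assert (hcn : 0 < Rabs (coef bs cs n)) by (apply Rabs_pos_lt; auto).
    assert (Hkey : INR n ^ q <= INR (S n) ^ q * Rabs (rat bs cs n)).
    { unfold rat. rewrite Rabs_div, Rabs_div, (Rabs_pos_eq (INR (S n))) by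
        first [apply pos_INR | apply not_0_INR; lia | apply prodlin_neq0; assumption].
      assert (hpc : 0 < Rabs (prodlin cs n)) by (apply Rabs_pos_lt, prodlin_neq0; auto).
      assert (hS : 0 < INR (S n)) by (apply lt_0_INR; lia).
      assert (hlow := prod_lower bs A n HAb ltac:(lra)).
      assert (hup := prod_upper cs A n HAc).
      rewrite Hlen in hlow. fold N in hlow, hup.
      assert (hSn : INR (S n) <= INR n + INR A) by (rewrite S_INR; lra).
      assert (hmid : INR n ^ q * (INR n + INR A) ^ S N <= INR (S n) ^ q * (INR n - INR A) ^ S N).
      { unfold q. rewrite !pow_mult, <- !Rpow_mult_distr. apply pow_incr. split.
        - apply Rmult_le_pos; [apply pow_le|]; lra.
        - rewrite S_INR. apply key_ineq; try lra. unfold c. rewrite mult_INR. simpl. ring. }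
      assert (hpq : 0 <= INR n ^ q) by (apply pow_le; lra).
      assert (hpq' : 0 <= INR (S n) ^ q) by (apply pow_le; lra).
      assert (hle1 : INR (S n) * Rabs (prodlin cs n) <= (INR n + INR A) ^ S N).
      { simpl pow. apply Rmult_le_compat; lra || (apply Rabs_pos) || auto. }
      assert (hle2 : INR n ^ q * (INR (S n) * Rabs (prodlin cs n)) <= INR (S n) ^ q * Rabs (prodlin bs n)).
      { eapply Rle_trans; [apply Rmult_le_compat_l; [lra|apply hle1]|].
        eapply Rle_trans; [apply hmid|]. apply Rmult_le_compat_l; lra. }
      apply Rmult_le_reg_r with (Rabs (prodlin cs n) * INR (S n)); [nra|].
      unfold Rdiv. replace (INR (S n) ^ q * (Rabs (prodlin bs n) * / Rabs (prodlin cs n) * / INR (S n)) *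
        (Rabs (prodlin cs n) * INR (S n))) with (INR (S n) ^ q * Rabs (prodlin bs n)) by (field; lra).
      nra. }
    assert (0 <= Rabs (rat bs cs n)) by apply Rabs_pos.
    nra.
Qed.

Lemma ratio_eq bs cs n : goodc cs -> (forall k, coef bs cs k <> 0) ->
  Rabs (coef bs cs (S n) / coef bs cs n) = Rabs (rat bs cs n).
Proof.
  intros Hc Hnz. rewrite coef_S by auto. f_equal. field. auto.
Qed.

Lemma radius_ok bs cs eta : goodc cs -> eta <> 0 ->
  (forall p : nat, ex_series (fun k => INR k ^ p * hweight bs cs eta k)) ->
  Rbar_lt (Rabs eta) (CV_radius (coef bs cs)).
Proof.
  intros Hc Heta Hconv.
  destruct (classic (exists k0, coef bs cs k0 = 0)) as [[k0 Hk0]|Hnt].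
  { eapply radius_term; eauto. }
  assert (Hnz : forall k, coef bs cs k <> 0) by (intros k h; apply Hnt; exists k; auto).
  assert (Hlim0 : is_lim_seq (fun n => coef bs cs n * eta ^ n) 0).
  { apply is_lim_seq_ext with (u := fun k => INR k ^ 0 * hweight bs cs eta k).
    - intros k; rewrite hweight_coef; simpl; ring.
    - apply ex_series_lim_0, Hconv. }
  destruct (Compare_dec.lt_eq_lt_dec (length bs) (S (length cs))) as [[hlt|heq]|hgt].
  - assert (Hr : CV_radius (coef bs cs) = p_infty).
    { apply CV_radius_infinite_DAlembert; auto.
      eapply is_lim_seq_ext; [intros n; symmetry; apply ratio_eq; auto|].
      apply rat_lim; auto. apply hh_lim_a; lia. right; eauto. }
    rewrite Hr; simpl; auto.
  - assert (Hr : CV_radius (coef bs cs) = / 1).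
    { apply CV_radius_finite_DAlembert; auto; [lra|].
      eapply is_lim_seq_ext; [intros n; symmetry; apply ratio_eq; auto|].
      apply rat_lim; auto. rewrite heq. apply hh_lim_b. right; eauto. }
    rewrite Hr, Rinv_1. simpl.
    destruct (Rtotal_order (Rabs eta) 1) as [h|[h|h]]; auto.
    + exfalso; eapply raabe; eauto.
    + exfalso. apply (CV_disk_outside (coef bs cs) eta); auto. rewrite Hr, Rinv_1. simpl; auto.
  - exfalso.
    assert (Hl : is_lim_seq (fun n => Rabs (rat bs cs n)) p_infty).
    { apply rat_lim; auto. apply hh_lim_c; lia. }
    apply is_lim_seq_spec in Hl. destruct (Hl (/ Rabs eta)) as [K HK].
    apply (not_lim0 (fun n => coef bs cs n * eta ^ n) K); auto.
    + apply Rmult_integral_contrapositive_currified; auto. apply pow_nonzero; auto.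
    + intros n Hn. specialize (HK n Hn). rewrite coef_S by auto. simpl pow.
      rewrite !Rabs_mult.
      assert (he : 0 < Rabs eta) by (apply Rabs_pos_lt; auto).
      assert (h1 : 1 <= Rabs (rat bs cs n) * Rabs eta).
      { apply Rmult_lt_compat_r with (r := Rabs eta) in HK; auto.
        rewrite Rinv_l in HK by lra. lra. }
      assert (h2 : 0 <= Rabs (coef bs cs n) * Rabs (eta ^ n)) by
        (apply Rmult_le_pos; apply Rabs_pos).
      nra.
Qed.

Definition ap (bs cs : list R) (p : nat) (k : nat) := INR k ^ p * coef bs cs k.

Lemma ap_S bs cs p k : PS_incr_1 (PS_derive (ap bs cs p)) k = ap bs cs (S p) k.
Proof.
  destruct k as [|k]; unfold ap, PS_derive; simpl.
  - rewrite !Rmult_0_l. reflexivity.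
  - ring.
Qed.

Lemma ap_radius bs cs p : CV_radius (ap bs cs p) = CV_radius (coef bs cs).
Proof.
  induction p as [|p IH].
  - apply CV_radius_ext. intros n; unfold ap; simpl; ring.
  - rewrite <- (CV_radius_ext _ _ (ap_S bs cs p)), CV_radius_incr_1, CV_radius_derive. auto.
Qed.

Lemma series_ap bs cs p x :
  Series (fun k => INR k ^ p * hweight bs cs x k) = PSeries (ap bs cs p) x.
Proof. unfold PSeries. apply Series_ext. intros k. rewrite hweight_coef. unfold ap. ring. Qed.

Lemma moment_deriv bs cs eta p : Rbar_lt (Rabs eta) (CV_radius (coef bs cs)) ->
  is_derive (fun x => Series (fun k => INR k ^ p * hweight bs cs x k)) eta
    (PSeries (PS_derive (ap bs cs p)) eta) /\
  eta * PSeries (PS_derive (ap bs cs p)) eta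
    = Series (fun k => INR k ^ S p * hweight bs cs eta k).
Proof.
  intros Hr. split.
  - eapply is_derive_ext; [intros t; symmetry; apply series_ap|].
    apply is_derive_PSeries. rewrite ap_radius; auto.
  - rewrite <- PSeries_incr_1, series_ap. unfold PSeries. apply Series_ext.
    intros k. rewrite ap_S. reflexivity.
Qed.

Lemma series_eta0 bs cs p : Series (fun k => INR k ^ S p * hweight bs cs 0 k) = 0.
Proof.
  rewrite (Series_ext _ (fun k => 0 * 0)).
  - rewrite Series_scal_l. ring.
  - intros k. rewrite hweight_coef. destruct k; simpl; ring.
Qed.

Lemma fin1 a t : t <> 0 -> a = - ((- a * t) / t).
Proof. intros; field; auto. Qed.

Lemma fin2 P h : P <> 0 -> h = (P * h) / P.
Proof. intros; field; auto. Qed.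

Lemma fin0 t : 0 = - (0 / t).
Proof. unfold Rdiv; ring. Qed.

From mathcomp Require Import all_boot all_algebra.
From mathcomp Require Import fingroup perm Rstruct ring.
Set Implicit Arguments. Unset Strict Implicit. Unset Printing Implicit Defensive.
Import GRing.Theory.
Local Open Scope ring_scope.

Lemma sumf_big (f : nat -> R) n : sum_f_R0 f n = \sum_(k < n.+1) f k.
Proof.
elim: n => [|n IH]; first by rewrite big_ord1.
by rewrite big_ord_recr /= -IH.
Qed.

Lemma sum_extend (F : nat -> R) i n : (i < n)%N -> (forall k, (i < k)%N -> F k = 0) ->
  \sum_(k < i.+1) F k = \sum_(k < n) F k.
Proof.
move=> lt Hz. rewrite (big_ord_widen n F lt) big_mkcond /=.
apply: eq_bigr => k _. case: ifP => // /negbT; rewrite -leqNgt => h. by rewrite Hz.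
Qed.

Lemma GB_mx Mo Sm St H n : gauss_borel Mo Sm St H ->
  (\matrix_(i < n, j < n) Sm i j) *m (\matrix_(i < n, j < n) Mo i j)
     *m (\matrix_(i < n, j < n) St i j)^T = diag_mx (\row_(i < n) H i).
Proof.
case=> [[_ HS] [[_ HT] HGB]]. apply/matrixP => i j. rewrite !mxE.
transitivity (sum_f_R0 (fun k => sum_f_R0 (fun l => Sm i k * Mo k l * St j l) j) i).
- rewrite sumf_big (@sum_extend (fun k => sum_f_R0 (fun l => Sm i k * Mo k l * St j l) j) i n (ltn_ord i)); last first.
    move=> k lt; rewrite sumf_big big1 // => l _; by rewrite HS // !mul0r.
  under eq_bigr => l _ do rewrite !mxE big_distrl /=.
  rewrite exchange_big /=. apply: eq_bigr => k _.
  rewrite sumf_big (@sum_extend (fun l => Sm i k * Mo k l * St j l) j n (ltn_ord j)); last first.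
    move=> l lt; by rewrite HT // mulr0.
  by apply: eq_bigr => l _; rewrite !mxE.
- rewrite HGB. case: (eqVneq i j) => [->|ne].
  + by rewrite PeanoNat.Nat.eqb_refl mulr1n.
  + rewrite mulr0n. case E: (PeanoNat.Nat.eqb i j) => //.
    move/PeanoNat.Nat.eqb_eq: E => E. by rewrite (val_inj E) eqxx in ne.
Qed.

Lemma det_unitri Sm n : lower_unitri Sm -> \det (\matrix_(i < n, j < n) Sm i j) = 1.
Proof.
case=> Hd Hl. rewrite det_trig; last by apply/is_trig_mxP => i j lt; rewrite mxE Hl.
by apply: big1 => i _; rewrite mxE Hd.
Qed.

Lemma tau_prod Mo Sm St H n : gauss_borel Mo Sm St H ->
  \det (\matrix_(i < n, j < n) Mo i j) = \prod_(i < n) H i.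
Proof.
move=> GB. have := congr1 determinant (GB_mx n GB).
case: (GB) => [HS [HT _]].
rewrite !det_mulmx det_tr (det_unitri n HS) (det_unitri n HT) mul1r mulr1.
move=> ->. rewrite det_diag. by apply: eq_bigr => i _; rewrite mxE.
Qed.

Lemma GBm Mo Sm St H : gauss_borel Mo Sm St H -> forall i j,
  \sum_(k < i.+1) \sum_(l < j.+1) Sm i k * Mo k l * St j l
  = if PeanoNat.Nat.eqb i j then H i else 0.
Proof.
case=> [_ [_ HGB]] i j. rewrite -HGB sumf_big. apply: eq_bigr => k _.
by rewrite sumf_big.
Qed.

Lemma row_orth Mo Sm St H n : gauss_borel Mo Sm St H ->
  forall j, (j < n)%N -> \sum_(k < n.+1) Sm n k * Mo k j = 0.
Proof.
move=> GB. have E0 := GBm GB. case: GB => [HS [[HTd HT] HGB]].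
elim/ltn_ind => j IH hj.
have E := E0 n j.
have E2 : PeanoNat.Nat.eqb n j = false.
  by apply/PeanoNat.Nat.eqb_neq => h; rewrite h ltnn in hj.
rewrite E2 in E. move: E.
rewrite exchange_big /= big_ord_recr /= -big_distrl /= HTd mulr1.
rewrite big1 ?add0r //.
move=> l _. rewrite -big_distrl /=. rewrite IH ?mul0r //.
by apply: ltn_trans (ltn_ord l) hj.
Qed.

Lemma widen_neq_max m (i : 'I_m) : (widen_ord (leqnSn m) i == ord_max) = false.
Proof. by rewrite -val_eqE /= ltn_eqF. Qed.

Lemma cramer Mo Sm St H m : gauss_borel Mo Sm St H ->
  \det (\matrix_(i < m.+1, j < m.+1) Mo (if i == ord_max then m.+1 else nat_of_ord i) j)
  = - Sm m.+1 m * \det (\matrix_(i < m.+1, j < m.+1) Mo i j).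
Proof.
move=> GB. have Horth := row_orth GB. case: GB => [[HSd HS] _].
set E := \matrix_(i < m.+1, k < m.+1) (if i == ord_max then - Sm m.+1 k else (i == k)%:R).
have -> : \matrix_(i < m.+1, j < m.+1) Mo (if i == ord_max then m.+1 else nat_of_ord i) j
    = E *m \matrix_(i < m.+1, j < m.+1) Mo i j.
  apply/matrixP => i j; rewrite !mxE.
  under eq_bigr => k _ do rewrite !mxE.
  case: ifP => [/eqP e|ne].
  - have := Horth m.+1 j (ltn_ord j). rewrite big_ord_recr /= HSd mul1r => h.
    under eq_bigr => k _ do rewrite mulNr.
    rewrite sumrN. apply/eqP. rewrite -addr_eq0 addrC. by apply/eqP.
  - rewrite (bigD1 i) //= eqxx mul1r big1 ?addr0 // => k hk.
    by rewrite eq_sym (negbTE hk) mul0r.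
rewrite det_mulmx. congr (_ * _).
rewrite det_trig; last first.
  apply/is_trig_mxP => i k lt; rewrite mxE.
  case: ifP => [/eqP e|ne].
  - by move: lt; rewrite e /= ltnNge -ltnS ltn_ord.
  - by rewrite -val_eqE ltn_eqF.
rewrite big_ord_recr /= big1 ?mul1r; first by rewrite mxE eqxx.
by move=> i _; rewrite mxE widen_neq_max eqxx.
Qed.

Lemma is_derive_bigsum (I : Type) (r : seq I) (P : pred I) (f : I -> R -> R) (f' : I -> R) x0 :
  (forall i, is_derive (f i) x0 (f' i)) ->
  is_derive (fun x => \sum_(i <- r | P i) f i x) x0 (\sum_(i <- r | P i) f' i).
Proof.
move=> Hf. elim: r => [|a r IH].
  rewrite big_nil. apply: (@is_derive_ext R_AbsRing R_NormedModule (fun _ => 0)); first by move=> t; rewrite big_nil.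
  exact: is_derive_const.
rewrite big_cons.
apply: (@is_derive_ext R_AbsRing R_NormedModule (fun x => if P a then f a x + \sum_(i <- r | P i) f i x
                              else \sum_(i <- r | P i) f i x)).
  by move=> t; rewrite big_cons.
case: (P a) => //. exact: is_derive_plus.
Qed.

Lemma widen_eq m (i j : 'I_m) :
  (widen_ord (leqnSn m) j == widen_ord (leqnSn m) i) = (j == i).
Proof. by rewrite -!val_eqE. Qed.

Lemma is_derive_prod_ord n (f : 'I_n -> R -> R) (f' : 'I_n -> R) x0 :
  (forall i, is_derive (f i) x0 (f' i)) ->
  is_derive (fun x => \prod_(i < n) f i x) x0
    (\sum_(i < n) \prod_(j < n) (if j == i then f' j else f j x0)).
Proof.
elim: n f f' => [|n IH] f f' Hf.
  rewrite big_ord0. apply: (@is_derive_ext R_AbsRing R_NormedModule (fun _ => 1)); first by move=> t; rewrite big_ord0.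
  exact: is_derive_const.
apply: (@is_derive_ext R_AbsRing R_NormedModule (fun x => (\prod_(i < n) f (widen_ord (leqnSn n) i) x) * f ord_max x)).
  by move=> t; rewrite big_ord_recr.
have H1 := IH (fun i => f (widen_ord (leqnSn n) i)) (fun i => f' (widen_ord (leqnSn n) i))
  (fun i => Hf _).
have H2 := is_derive_mult _ _ _ _ _ H1 (Hf ord_max) Rmult_comm.
suff -> : \sum_(i < n.+1) \prod_(j < n.+1) (if j == i then f' j else f j x0)
  = (\sum_(i < n) \prod_(j < n) (if j == i then f' (widen_ord (leqnSn n) j)
       else f (widen_ord (leqnSn n) j) x0)) * f ord_max x0
    + (\prod_(i < n) f (widen_ord (leqnSn n) i) x0) * f' ord_max by exact: H2.
have E1 : forall i : 'I_n,
    \prod_(j < n.+1) (if j == widen_ord (leqnSn n) i then f' j else f j x0)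
    = (\prod_(j < n) (if j == i then f' (widen_ord (leqnSn n) j)
         else f (widen_ord (leqnSn n) j) x0)) * f ord_max x0.
  move=> i. rewrite big_ord_recr eq_sym widen_neq_max.
  by under eq_bigr => j _ do rewrite widen_eq.
have E2 : \prod_(j < n.+1) (if j == ord_max then f' j else f j x0)
    = (\prod_(i < n) f (widen_ord (leqnSn n) i) x0) * f' ord_max.
  rewrite big_ord_recr eqxx.
  by under eq_bigr => j _ do rewrite widen_neq_max.
rewrite big_ord_recr (eq_bigr _ (fun i _ => E1 i)) E2 -big_distrl. by [].
Qed.

Definition ddet n (A' A : 'M[R]_n) : R :=
  \sum_(s : 'S_n) (-1) ^+ s * \sum_(i < n) \prod_(j < n) (if j == i then A' j (s j) else A j (s j)).

Lemma is_derive_det n (F : R -> 'M[R]_n) (F' : 'M[R]_n) x0 :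
  (forall i j, is_derive (fun x => F x i j) x0 (F' i j)) ->
  is_derive (fun x => \det (F x)) x0 (ddet F' (F x0)).
Proof.
move=> HF.
apply: (@is_derive_ext R_AbsRing R_NormedModule
  (fun x => \sum_(s : 'S_n) (-1) ^+ s * \prod_(i < n) F x i (s i))); first by [].
apply: is_derive_bigsum => s.
apply: is_derive_scal.
exact (@is_derive_prod_ord n (fun j x => F x j (s j)) (fun j => F' j (s j)) x0 (fun j => HF j (s j))).
Qed.

Definition rr n (G A : 'M[R]_n) (i : 'I_n) : 'M[R]_n :=
  \matrix_(j, k) (if j == i then G j k else A j k).

Lemma ddet_rows n (G A : 'M[R]_n) : ddet G A = \sum_(i < n) \det (rr G A i).
Proof.
rewrite /ddet. under eq_bigr => s _ do rewrite big_distrr.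
rewrite exchange_big.
rewrite /rr /determinant. under [RHS]eq_bigr => i _ do under eq_bigr => s _ do under eq_bigr => j _ do rewrite mxE.
reflexivity.
Qed.

Lemma det_lin_row n (i : 'I_n) (A1 A2 A : 'M[R]_n) c1 c2 :
  c1 * \det (rr A1 A i) + c2 * \det (rr A2 A i)
  = \det (rr (\matrix_(j, k) (c1 * A1 j k + c2 * A2 j k)) A i).
Proof.
symmetry. apply: (@determinant_multilinear _ _ _ _ _ i).
- apply/rowP => k. by rewrite /rr !mxE eqxx.
- apply/matrixP => j k. by rewrite /rr !mxE eq_sym (negbTE (neq_lift i j)).
- apply/matrixP => j k. by rewrite /rr !mxE eq_sym (negbTE (neq_lift i j)).
Qed.

Lemma ddet_lin n (A1 A2 A : 'M[R]_n) c1 c2 :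
  c1 * ddet A1 A + c2 * ddet A2 A = ddet (\matrix_(i, j) (c1 * A1 i j + c2 * A2 i j)) A.
Proof.
rewrite !ddet_rows !big_distrr -big_split /=.
under eq_bigr => i _ do rewrite det_lin_row.
reflexivity.
Qed.

Lemma sumdet_last (Mo : nat -> nat -> R) m :
  \sum_(i < m.+1) \det (rr (\matrix_(j < m.+1, k < m.+1) Mo j.+1 k) (\matrix_(j < m.+1, k < m.+1) Mo j k) i)
  = \det (\matrix_(j < m.+1, k < m.+1) Mo (if j == ord_max then m.+1 else nat_of_ord j) k).
Proof.
rewrite big_ord_recr big1; last first.
  move=> i _.
  have lt : (i.+1 < m.+1)%N by rewrite ltnS ltn_ord.
  apply: (@determinant_alternate _ _ _ (widen_ord (leqnSn m) i) (Ordinal lt)).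
    by rewrite -val_eqE /= neq_ltn ltnSn.
  move=> k. rewrite /rr !mxE eqxx.
  have -> : (Ordinal lt == widen_ord (leqnSn m) i) = false by rewrite -val_eqE /= gtn_eqF.
  Show. by [].
rewrite /= add0r. f_equal. apply/matrixP => j k. rewrite /rr !mxE.
case: ifP => [/eqP -> | _] //; by rewrite mxE.
Qed.

Lemma tau_zero_col bs1 bs2 cs eta1 eta2 n (j0 : 'I_n) :
  (forall i, moment bs1 bs2 cs eta1 eta2 i j0 = 0) -> tau bs1 bs2 cs eta1 eta2 n = 0.
Proof.
move=> Hz. rewrite /tau (expand_det_col _ j0) big1 // => i _.
by rewrite mxE Hz mul0r.
Qed.

Lemma eta1_neq0 bs1 bs2 cs eta1 eta2 :
  (forall n, tau bs1 bs2 cs eta1 eta2 n <> 0) -> eta1 <> 0.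
Proof.
move=> Ht h. apply: (Ht 3%N). apply: (@tau_zero_col _ _ _ _ _ 3 (Ordinal (isT : (2 < 3)%N))) => i.
rewrite /moment /= h addn1. exact: series_eta0.
Qed.

Lemma eta2_neq0 bs1 bs2 cs eta1 eta2 :
  (forall n, tau bs1 bs2 cs eta1 eta2 n <> 0) -> eta2 <> 0.
Proof.
move=> Ht h. apply: (Ht 4%N). apply: (@tau_zero_col _ _ _ _ _ 4 (Ordinal (isT : (3 < 4)%N))) => i.
rewrite /moment /= h addn1. exact: series_eta0.
Qed.

Lemma p1_final Mo Sm St H n (T : R) : gauss_borel Mo Sm St H ->
  \det (\matrix_(i < n, j < n) Mo i j) <> 0 ->
  T = \sum_(i < n) \det (rr (\matrix_(i < n, j < n) Mo i.+1 j) (\matrix_(i < n, j < n) Mo i j) i) ->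
  p1 Sm n = Ropp (Rdiv T (\det (\matrix_(i < n, j < n) Mo i j))).
Proof.
move=> GB Hd ->. case: n Hd => [|m] Hd.
  rewrite big_ord0. exact: fin0.
rewrite sumdet_last (cramer m GB). exact: fin1.
Qed.

Local Close Scope ring_scope.
Local Open Scope R_scope.

Theorem mainTheorem10
  (bs1 bs2 cs : list R) (eta1 eta2 : R)
  (Hc : forall c, In c cs -> forall m : nat, c <> - INR m)
  (Hconv1 : forall p : nat, ex_series (fun k => INR k ^ p * hweight bs1 cs eta1 k))
  (Hconv2 : forall p : nat, ex_series (fun k => INR k ^ p * hweight bs2 cs eta2 k))
  (Htau : forall n : nat, tau bs1 bs2 cs eta1 eta2 n <> 0)
  (Sm St : nat -> nat -> R) (H : nat -> R)
  (HGB : gauss_borel (moment bs1 bs2 cs eta1 eta2) Sm St H) :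
  forall n : nat,
    H n = tau bs1 bs2 cs eta1 eta2 (S n) / tau bs1 bs2 cs eta1 eta2 n /\
    exists d1 d2 : R,
      is_derive (fun x => tau bs1 bs2 cs x eta2 n) eta1 d1 /\
      is_derive (fun y => tau bs1 bs2 cs eta1 y n) eta2 d2 /\
      p1 Sm n = - ((eta1 * d1 + eta2 * d2) / tau bs1 bs2 cs eta1 eta2 n).
Proof.
move=> n.
have Hprod : forall k, tau bs1 bs2 cs eta1 eta2 k = (\prod_(i < k) H i)%R.
  move=> k. exact: (tau_prod k HGB).
split.
  have hn := Htau n. rewrite Hprod in hn.
  rewrite (Hprod n.+1) big_ord_recr /= (Hprod n). exact: fin2.
have h1 := eta1_neq0 Htau. have h2 := eta2_neq0 Htau.
have r1 := radius_ok bs1 cs eta1 Hc h1 Hconv1.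
have r2 := radius_ok bs2 cs eta2 Hc h2 Hconv2.
exists (ddet (\matrix_(i < n, j < n) (if Nat.even j
          then PSeries (PS_derive (ap bs1 cs (i + Nat.div2 j)%N)) eta1 else 0))
          (\matrix_(i < n, j < n) moment bs1 bs2 cs eta1 eta2 i j))%R.
exists (ddet (\matrix_(i < n, j < n) (if Nat.even j
          then 0 else PSeries (PS_derive (ap bs2 cs (i + Nat.div2 j)%N)) eta2))
          (\matrix_(i < n, j < n) moment bs1 bs2 cs eta1 eta2 i j))%R.
split.
  apply: (@is_derive_ext R_AbsRing R_NormedModule
    (fun x => determinant (\matrix_(i < n, j < n) moment bs1 bs2 cs x eta2 i j)%R)); first by [].
  apply: (@is_derive_det n (fun x => (\matrix_(i < n, j < n) moment bs1 bs2 cs x eta2 i j)%R)) => i j.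
  apply: (@is_derive_ext R_AbsRing R_NormedModule (fun x => moment bs1 bs2 cs x eta2 i j));
    first by move=> t; rewrite mxE.
  rewrite mxE /moment. case: (Nat.even j).
    exact: (proj1 (moment_deriv bs1 cs eta1 (i + Nat.div2 j)%N r1)).
  exact: is_derive_const.
split.
  apply: (@is_derive_ext R_AbsRing R_NormedModule
    (fun y => determinant (\matrix_(i < n, j < n) moment bs1 bs2 cs eta1 y i j)%R)); first by [].
  apply: (@is_derive_det n (fun y => (\matrix_(i < n, j < n) moment bs1 bs2 cs eta1 y i j)%R)) => i j.
  apply: (@is_derive_ext R_AbsRing R_NormedModule (fun y => moment bs1 bs2 cs eta1 y i j));
    first by move=> t; rewrite mxE.
  rewrite mxE /moment. case: (Nat.even j).
    exact: is_derive_const.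
  exact: (proj1 (moment_deriv bs2 cs eta2 (i + Nat.div2 j)%N r2)).
apply: (p1_final HGB (Htau n)).
rewrite RplusE !RmultE ddet_lin ddet_rows. apply: congr_big => // i _. f_equal. f_equal.
apply/matrixP => i' j. rewrite !mxE /moment. case: (Nat.even j).
  rewrite GRing.mulr0 GRing.addr0. exact: (proj2 (moment_deriv bs1 cs eta1 (i' + Nat.div2 j)%N r1)).
rewrite GRing.mulr0 GRing.add0r. exact: (proj2 (moment_deriv bs2 cs eta2 (i' + Nat.div2 j)%N r2)).
Qed.
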